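(* Let $\Phi$ be an irreducible root system of rank $r$. For any $i\neq j$ in $\{0,1,\dots,r\}$ with $\gcd(m_i,m_j)=1$, the set $\Phi\cap\mathbb Z\{\tilde\alpha_k: k\in\{0,\dots,r\}\setminus\{i,j\}\}$ (the root subsystem generated by the roots of the nodes of the affine Dynkin diagram remaining after deleting the nodes $\tilde\alpha_i,\tilde\alpha_j$) is a good root subsystem of $\Phi$. Conversely, every good root subsystem of $\Phi$ is $W$-conjugate to one obtained in this way.
   Context: Let $\Phi$ be an irreducible reduced crystallographic root system of rank $r$ with Weyl group $W$, $\{\alpha_1,\dots,\alpha_r\}$ a base, and $\theta=\sum_{i=1}^r m_i\alpha_i$ the highest root (each $m_i$ a positive integer). Set $m_0=1$, $\tilde\alpha_0=-\theta$ and $\tilde\alpha_i=\alpha_i$ for $1\le i\le r$; $m_i$ is the Dynkin label of $\tilde\alpha_i$. $\mathbb Z\{\cdot\}$ denotes the integral span. A root subsystem $\Psi\subseteq\Phi$ is closed if $\lambda,\mu\in\Psi$, $\lambda+\mu\in\Phi$ imply $\lambda+\mu\in\Psi$; $\operatorname{rk}\Psi=\dim\operatorname{Span}\Psi$. A good root subsystem of $\Phi$ is a closed root subsystem of rank $r-1$ maximal under inclusion among closed root subsystems of rank $r-1$. *)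

(* Defs.v *)
From HB Require Import structures.
From mathcomp Require Import all_boot all_order all_algebra.
From mathcomp Require Import reals.
Set Implicit Arguments. Unset Strict Implicit. Unset Printing Implicit Defensive.
Import Order.TTheory GRing.Theory Num.Theory.
Local Open Scope ring_scope.

Section RootSystems.
Variables (R : realType) (n : nat).
Notation V := 'rV[R]_n.

Definition dotv (u v : V) : R := (u *m v^T) 0 0.

Definition refl (a x : V) : V := x - (2 * dotv x a / dotv a a) *: a.

(* Matrix whose rows are the elements of s; its rank is dim Span s. *)
Definition mxs (s : seq V) : 'M[R]_(size s, n) := \matrix_(k < size s) s`_k.
Definition rk (s : seq V) : nat := \rank (mxs s).

Definition root_system (Phi : seq V) : Prop :=
  [/\ 0 \notin Phi,
      rk Phi = n,
      (forall a b, a \in Phi -> b \in Phi -> refl a b \in Phi) &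
      (forall a b, a \in Phi -> b \in Phi -> 2 * dotv b a / dotv a a \is a Num.int)].

Definition reduced (Phi : seq V) : Prop :=
  forall a (c : R), a \in Phi -> c *: a \in Phi -> c = 1 \/ c = -1.

(* Phi cannot be split into two nonempty mutually orthogonal parts. *)
Definition irreducible (Phi : seq V) : Prop :=
  Phi != [::] /\
  forall P : pred V,
    (exists2 a, a \in Phi & P a) -> (exists2 b, b \in Phi & ~~ P b) ->
    exists a, exists b, [/\ a \in Phi, b \in Phi, P a, ~~ P b & dotv a b != 0].

Definition ncomb (alpha : 'I_n -> V) (c : 'I_n -> nat) : V :=
  \sum_(i < n) (c i)%:R *: alpha i.

Definition is_base (Phi : seq V) (alpha : 'I_n -> V) : Prop :=
  [/\ forall i, alpha i \in Phi,
      row_free (\matrix_(i < n) alpha i) &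
      forall b, b \in Phi -> exists c : 'I_n -> nat,
        b = ncomb alpha c \/ b = - ncomb alpha c].

Definition highest_root (Phi : seq V) (alpha : 'I_n -> V) (theta : V) : Prop :=
  theta \in Phi /\
  forall b, b \in Phi -> exists c : 'I_n -> nat, theta - b = ncomb alpha c.

Definition closed_subsystem (Phi Psi : seq V) : Prop :=
  [/\ {subset Psi <= Phi},
      (forall a b, a \in Psi -> b \in Psi -> refl a b \in Psi) &
      (forall a b, a \in Psi -> b \in Psi -> a + b \in Phi -> a + b \in Psi)].

Definition good_subsystem (Phi Psi : seq V) : Prop :=
  [/\ closed_subsystem Phi Psi,
      rk Psi = n.-1 &
      forall Psi' : seq V, closed_subsystem Phi Psi' -> rk Psi' = n.-1 ->
        {subset Psi <= Psi'} -> {subset Psi' <= Psi}].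

Definition weyl (Phi : seq V) (w : V -> V) : Prop :=
  exists s : seq V, {subset s <= Phi} /\
    forall x, w x = foldr (fun a y => refl a y) x s.

(* Affine simple roots: index 0 is -theta, index i+1 is alpha_i. *)
Definition atil (alpha : 'I_n -> V) (theta : V) (k : 'I_n.+1) : V :=
  match unlift ord0 k with None => - theta | Some i => alpha i end.

Definition mlab (m : 'I_n -> nat) (k : 'I_n.+1) : nat :=
  match unlift ord0 k with None => 1%N | Some i => m i end.

Definition in_zspan_del (alpha : 'I_n -> V) (theta : V) (i j : 'I_n.+1) (b : V) : Prop :=
  exists c : 'I_n.+1 -> int,
    b = \sum_(k < n.+1 | (k != i) && (k != j)) (c k)%:~R *: atil alpha theta k.

End RootSystems.

(* Main.v *)
Require Import Defs.
From HB Require Import structures.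
From mathcomp Require Import all_boot all_order all_algebra.
From mathcomp Require Import reals.
From mathcomp Require Import ring lra zify.
Import Order.TTheory GRing.Theory Num.Theory.
Local Open Scope ring_scope.
Set Implicit Arguments. Unset Strict Implicit. Unset Printing Implicit Defensive.

Section Basic.
Variables (R : realType) (n : nat).
Notation V := 'rV[R]_n.
Implicit Types u v x y a b : V.

Lemma dotvE u v : dotv u v = \sum_i u 0 i * v 0 i.
Proof. by rewrite /dotv mxE; apply: eq_bigr => i _; rewrite mxE. Qed.

Lemma dotvC u v : dotv u v = dotv v u.
Proof. by rewrite !dotvE; apply: eq_bigr => i _; rewrite mulrC. Qed.

Lemma dotvDl u v x : dotv (u + v) x = dotv u x + dotv v x.
Proof. by rewrite !dotvE -big_split; apply: eq_bigr => i _; rewrite mxE mulrDl. Qed.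

Lemma dotvZl (c : R) u x : dotv (c *: u) x = c * dotv u x.
Proof. by rewrite !dotvE mulr_sumr; apply: eq_bigr => i _; rewrite mxE mulrA. Qed.

Lemma dotvNl u x : dotv (- u) x = - dotv u x.
Proof. by rewrite -scaleN1r dotvZl mulN1r. Qed.

Lemma dotvBl u v x : dotv (u - v) x = dotv u x - dotv v x.
Proof. by rewrite dotvDl dotvNl. Qed.

Lemma dotv0l x : dotv 0 x = 0.
Proof. by rewrite -(scale0r 0) dotvZl mul0r. Qed.

Lemma dotvDr u v x : dotv x (u + v) = dotv x u + dotv x v.
Proof. by rewrite dotvC dotvDl !(dotvC x). Qed.
Lemma dotvZr (c : R) u x : dotv x (c *: u) = c * dotv x u.
Proof. by rewrite dotvC dotvZl dotvC. Qed.
Lemma dotvNr u x : dotv x (- u) = - dotv x u.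
Proof. by rewrite dotvC dotvNl dotvC. Qed.
Lemma dotvBr u v x : dotv x (u - v) = dotv x u - dotv x v.
Proof. by rewrite dotvDr dotvNr. Qed.
Lemma dotv0r x : dotv x 0 = 0.
Proof. by rewrite dotvC dotv0l. Qed.

Lemma dotv_suml (I : Type) (s : seq I) (P : pred I) (F : I -> V) x :
  dotv (\sum_(i <- s | P i) F i) x = \sum_(i <- s | P i) dotv (F i) x.
Proof.
elim/big_rec2: _ => [|i y1 y2 _ <-]; first by rewrite dotv0l.
by rewrite dotvDl.
Qed.

Lemma dotv_sumr (I : Type) (s : seq I) (P : pred I) (F : I -> V) x :
  dotv x (\sum_(i <- s | P i) F i) = \sum_(i <- s | P i) dotv x (F i).
Proof. by rewrite dotvC dotv_suml; apply: eq_bigr => i _; rewrite dotvC. Qed.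

Lemma dotvv_ge0 x : 0 <= dotv x x.
Proof. by rewrite dotvE sumr_ge0 // => i _; rewrite -expr2 sqr_ge0. Qed.

Lemma dotvv_eq0 x : (dotv x x == 0) = (x == 0).
Proof.
apply/idP/idP => [|/eqP->]; last by rewrite dotv0l.
rewrite dotvE psumr_eq0 => [/allP H|i _]; last by rewrite -expr2 sqr_ge0.
apply/eqP/rowP => i; rewrite mxE.
have := H i (mem_index_enum _); rewrite /= mulf_eq0 orbb => /eqP //.
Qed.


Lemma refl_adj a x y : dotv (refl a x) y = dotv x (refl a y).
Proof.
rewrite /refl dotvBl dotvBr dotvZl dotvZr; congr (_ - _).
rewrite (dotvC a y); set p := dotv x a; set q := dotv y a.
by rewrite -!mulrA; congr (_ * _); rewrite mulrC mulrA [q * _]mulrC.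
Qed.

Lemma refl_invol a x : dotv a a != 0 -> refl a (refl a x) = x.
Proof.
move=> Ha; rewrite {1}/refl dotvBl dotvZl.
set c := 2 * dotv x a / dotv a a.
have -> : 2 * (dotv x a - c * dotv a a) / dotv a a = - c.
  by rewrite /c; field.
by rewrite /refl -/c scaleNr opprK subrK.
Qed.

Lemma refl_iso a x y : dotv a a != 0 -> dotv (refl a x) (refl a y) = dotv x y.
Proof. by move=> Ha; rewrite refl_adj refl_invol. Qed.

Definition W (s : seq V) x := foldr (fun a y => refl a y) x s.

Lemma W_cat s t x : W (s ++ t) x = W s (W t x).
Proof. by rewrite /W foldr_cat. Qed.

Lemma W_inv s x : all (fun a => dotv a a != 0) s -> W (rev s) (W s x) = x.
Proof.
elim: s x => [//|a s IH] x /= /andP[Ha Hs].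
by rewrite rev_cons /W foldr_rcons -/(W _ _) refl_invol // IH.
Qed.

Lemma W_iso s x y : all (fun a => dotv a a != 0) s -> dotv (W s x) (W s y) = dotv x y.
Proof.
elim: s => [//|a s IH] /= /andP[Ha Hs].
by rewrite refl_iso // IH.
Qed.

Lemma dotv_perp_refl a x v : dotv x v = 0 -> dotv a v = 0 -> dotv (refl a x) v = 0.
Proof. by move=> h1 h2; rewrite /refl dotvBl dotvZl h1 h2 mulr0 subrr. Qed.


Lemma row_mxs (s : seq V) (k : 'I_(size s)) : row k (mxs s) = s`_k.
Proof. by rewrite rowK. Qed.

Lemma mem_inspan (t : seq V) x : x \in t -> (x <= mxs t)%MS.
Proof.
move=> xt; have kt : (index x t < size t)%N by rewrite index_mem.
by rewrite -(nth_index 0 xt) -(row_mxs (Ordinal kt)) row_sub.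
Qed.

Lemma mxs_subP (s : seq V) m (M : 'M[R]_(m, n)) :
  (forall x, x \in s -> (x <= M)%MS) -> (mxs s <= M)%MS.
Proof. by move=> H; apply/row_subP => k; rewrite row_mxs; apply/H/mem_nth. Qed.

Lemma rk_subset (s t : seq V) : {subset s <= t} -> (rk s <= rk t)%N.
Proof. by move=> st; apply/mxrankS/mxs_subP => x /st; apply: mem_inspan. Qed.

Lemma mxs_mul_tr (s : seq V) v (k : 'I_(size s)) :
  (mxs s *m v^T) k 0 = dotv s`_k v.
Proof. by rewrite /dotv !mxE; apply: eq_bigr => j _; rewrite !mxE. Qed.

Lemma rk_perp (s : seq V) v : v != 0 -> (forall b, b \in s -> dotv b v = 0) ->
  (rk s < n)%N.
Proof.
move=> v0 H; rewrite ltn_neqAle rank_leq_col andbT; apply/negP => /eqP full.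
have : (v <= mxs s)%MS by apply: submx_full; apply/eqP; exact: full.
case/submxP => z vz.
have M0 : mxs s *m v^T = 0.
  by apply/matrixP => k j; rewrite ord1 mxs_mul_tr H ?mem_nth // mxE.
move/negP: v0; apply; rewrite -dotvv_eq0 {1}vz /dotv -mulmxA M0 mulmx0 mxE.
by [].
Qed.

Lemma perp_span (s : seq V) x z : (x <= mxs s)%MS ->
  (forall b, b \in s -> dotv b z = 0) -> dotv x z = 0.
Proof.
case/submxP => D -> H.
have M0 : mxs s *m z^T = 0.
  by apply/matrixP => k j; rewrite ord1 mxs_mul_tr H ?mem_nth // mxE.
by rewrite /dotv -mulmxA M0 mulmx0 mxE.
Qed.

Lemma perp_exists (s : seq V) : (rk s < n)%N ->
  exists2 v, v != 0 & forall b, b \in s -> dotv b v = 0.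
Proof.
move=> lt.
set K := kermx (mxs s)^T.
have rK : \rank K = (n - rk s)%N by rewrite mxrank_ker mxrank_tr.
have : K != 0 by rewrite -mxrank_eq0 rK subn_eq0 -ltnNge.
move=> K0.
have [k Kk] : exists k, row k K != 0.
  apply/existsP; apply: contraR K0 => /existsPn H; apply/eqP/row_matrixP => k.
  by rewrite row0; apply/eqP/negPn/H.
exists (row k K) => // b bs.
have : row k K *m (mxs s)^T = 0 by apply/sub_kermxP; rewrite row_sub.
have kt : (index b s < size s)%N by rewrite index_mem.
move/matrixP/(_ 0 (Ordinal kt)); rewrite !mxE => H.
rewrite dotvC -(nth_index 0 bs) dotvE -[RHS]H; apply: eq_bigr => j _; rewrite !mxE.
by [].
Qed.


End Basic.

Lemma seq_bound (R : realType) (s : seq R) : exists2 M, 0 <= M & forall x, x \in s -> `|x| <= M.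
Proof.
elim: s => [|a s [M M0 HM]]; first by exists 0.
exists (`|a| + M); first by rewrite addr_ge0.
move=> x; rewrite inE => /orP[/eqP->|/HM h]; first by rewrite lerDl.
by rewrite (le_trans h) // lerDr.
Qed.

Lemma seq_gap (R : realType) (s : seq R) : exists2 d, 0 < d & forall x, x \in s -> x != 0 -> d <= `|x|.
Proof.
elim: s => [|a s [d d0 Hd]]; first by exists 1.
have [->|a0] := eqVneq a 0.
  by exists d => // x; rewrite inE => /orP[/eqP->|/Hd //]; rewrite eqxx.
exists (Num.min d `|a|); first by rewrite lt_min d0 normr_gt0.
move=> x; rewrite inE => /orP[/eqP->|xs] x0; first by rewrite ge_min lexx orbT.
by rewrite ge_min Hd.
Qed.

Lemma leq_predS (a b : nat) : (a <= b.+1)%N -> (a.-1 <= b)%N.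
Proof. by case: a. Qed.

Lemma leq_pred_lt (a b : nat) : (a < b)%N -> (a <= b.-1)%N.
Proof. by case: b. Qed.

Lemma int_gauss (a b : int) (p q : nat) : coprime p q -> a * q%:Z = b * p%:Z ->
  exists t : int, a = t * p%:Z /\ b = t * q%:Z.
Proof.
case: p => [|p] cop E.
  move: cop; rewrite /coprime gcd0n => /eqP q1; subst q.
  by exists b; split; lia.
have : (p.+1%:Z %| a * q%:Z)%Z by rewrite E dvdz_mull.
rewrite Gauss_dvdzl ?coprimezE //; case/dvdzP => t at_.
exists t; split => //; apply: (mulIf (x := p.+1%:Z)) => //.
by rewrite -E at_ mulrAC.
Qed.

Section Roots.
Variables (R : realType) (n : nat) (Phi : seq 'rV[R]_n) (alpha : 'I_n -> 'rV[R]_n)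
  (theta : 'rV[R]_n) (m : 'I_n -> nat).
Hypotheses (HR : root_system Phi) (HB : is_base Phi alpha) (Hth : theta = ncomb alpha m)
  (Hthp : theta \in Phi).
Notation V := 'rV[R]_n.

Definition Amx : 'M[R]_n := \matrix_(i < n) alpha i.

Lemma Amx_unit : Amx \in unitmx.
Proof. by case: HB => _ h _; rewrite -row_free_unit. Qed.

Definition dv (j : 'I_n) : V := row j (invmx Amx)^T.

Lemma dotv_dv k j : dotv (alpha k) (dv j) = (k == j)%:R.
Proof.
have := mulmxV Amx_unit => /matrixP/(_ k j); rewrite !mxE => <-.
by rewrite dotvE; apply: eq_bigr => l _; rewrite !mxE.
Qed.

Lemma span_alpha (x : V) : x = \sum_k (x *m invmx Amx) 0 k *: alpha k.
Proof.
rewrite -{1}(mulmxKV Amx_unit x) mulmx_sum_row; apply: eq_bigr => k _.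
by rewrite rowK.
Qed.

Lemma Phi_neq0 b : b \in Phi -> b != 0.
Proof. by case: HR => h _ _ _ bP; apply: contraNneq h => <-. Qed.

Lemma Phi_dot b : b \in Phi -> dotv b b != 0.
Proof. by move/Phi_neq0; rewrite dotvv_eq0. Qed.

Lemma Phi_dot_gt0 b : b \in Phi -> 0 < dotv b b.
Proof. by move=> bP; rewrite lt_def Phi_dot // dotvv_ge0. Qed.

Lemma refl_Phi a b : a \in Phi -> b \in Phi -> refl a b \in Phi.
Proof. by case: HR => _ _ h _; apply: h. Qed.

Lemma W_Phi s b : {subset s <= Phi} -> b \in Phi -> W s b \in Phi.
Proof.
elim: s => [//|a s IH] sP bP /=.
by apply: refl_Phi; [apply: sP; rewrite inE eqxx | apply: IH => // x xs; apply: sP; rewrite inE xs orbT].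
Qed.

Lemma all_dot s : {subset s <= Phi} -> all (fun a => dotv a a != 0) s.
Proof. by move=> sP; apply/allP => a /sP; apply: Phi_dot. Qed.

Lemma alpha_Phi k : alpha k \in Phi.
Proof. by case: HB. Qed.

Lemma dotv_ncomb_dv c j : dotv (ncomb alpha c) (dv j) = (c j)%:R.
Proof.
rewrite /ncomb dotv_suml (bigD1 j) //= dotvZl dotv_dv eqxx mulr1 big1 ?addr0 //.
by move=> k kj; rewrite dotvZl dotv_dv (negbTE kj) mulr0.
Qed.


Definition Inv (v u : V) := forall b, b \in Phi -> exists2 b', b' \in Phi & dotv u b = dotv v b'.

Lemma Inv_refl v u a : a \in Phi -> Inv v u -> Inv v (refl a u).
Proof.
move=> aP Iu b bP; rewrite refl_adj; apply: Iu; exact: refl_Phi.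
Qed.

Lemma dominate v : exists2 s, {subset s <= Phi} & forall k, 0 <= dotv (W s v) (alpha k).
Proof.
have [M M0 HM] := seq_bound [seq dotv v b | b <- Phi].
have [d0 d00 Hd] := seq_gap [seq dotv v b | b <- Phi].
have [N N0 HN] := seq_bound [seq dotv b b | b <- Phi].
set x := \sum_k dv k.
have dx k : dotv (alpha k) x = 1.
  rewrite dotv_sumr (bigD1 k) //= dotv_dv eqxx big1 ?addr0 // => l lk.
  by rewrite dotv_dv eq_sym (negbTE lk).
set y := x *m invmx Amx.
have xe : x = \sum_k y 0 k *: alpha k by apply: span_alpha.
set B := \sum_k `|y 0 k| * M.
set del := 2 * d0 / (N + 1).
have del0 : 0 < del by rewrite /del divr_gt0 ?mulr_gt0 // ltr_wpDl.
have fB u : Inv v u -> `|dotv u x| <= B.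
  move=> Iu; rewrite xe dotv_sumr; apply: le_trans (ler_norm_sum _ _ _) _.
  apply: ler_sum => k _; rewrite dotvZr normrM ler_wpM2l //.
  have [bb bbP ->] := Iu _ (alpha_Phi k); exact: (HM _ (map_f (dotv v) bbP)).
have step u k : Inv v u -> dotv u (alpha k) < 0 ->
    dotv u x + del <= dotv (refl (alpha k) u) x.
  move=> Iu neg.
  have [b' b'P eb] := Iu _ (alpha_Phi k).
  have ha : d0 <= - dotv u (alpha k).
    rewrite -ltr0_norm // eb; apply: Hd; first exact: map_f.
    by rewrite -eb lt_eqF.
  have p0 := Phi_dot_gt0 (alpha_Phi k).
  have pN : dotv (alpha k) (alpha k) <= N.
    by apply: le_trans (ler_norm _) _; exact: (HN _ (map_f (fun b => dotv b b) (alpha_Phi k))).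
  rewrite /refl dotvBl dotvZl dx mulr1 lerD2l /del.
  set p := dotv (alpha k) (alpha k) in p0 pN *; set a := dotv u (alpha k) in neg ha *.
  rewrite ler_pdivrMr ?ltr_wpDl // -mulNr mulrAC ler_pdivlMr //.
  nra.
have main K : forall u, Inv v u -> B - dotv u x <= K%:R * del ->
    exists2 s, {subset s <= Phi} & forall k, 0 <= dotv (W s u) (alpha k).
  elim: K => [|K IH] u Iu Hu.
    case: (boolP [forall k, 0 <= dotv u (alpha k)]) => [/forallP H|].
      by exists [::].
    move/forallPn => [k]; rewrite -ltNge => neg.
    have := step u k Iu neg.
    have := fB _ (Inv_refl (alpha_Phi k) Iu).
    have := fB _ Iu.
    rewrite mul0r in Hu.
    move=> h1 h2 h3.
    have := ler_norm (dotv (refl (alpha k) u) x).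
    move: h1 h2 h3; rewrite !ler_norml => /andP[? ?] /andP[? ?] ? ?.
    lra.
  case: (boolP [forall k, 0 <= dotv u (alpha k)]) => [/forallP H|].
    by exists [::].
  move/forallPn => [k]; rewrite -ltNge => neg.
  have := step u k Iu neg => h.
  have [s sP Hs] := IH _ (Inv_refl (alpha_Phi k) Iu) (ltac:(rewrite -natr1 mulrDl mul1r in Hu; lra)).
  exists (s ++ [:: alpha k]).
    by move=> z; rewrite mem_cat inE => /orP[/sP //|/eqP->]; apply: alpha_Phi.
  by move=> j; rewrite W_cat.
have Iv : Inv v v by move=> b bP; exists b.
apply: (main (Num.bound (`|B - dotv v x| / del))) => //.
have := archi_boundP (divr_ge0 (normr_ge0 (B - dotv v x)) (ltW del0)).
rewrite ltr_pdivrMr // => h; apply: le_trans (ltW h); exact: ler_norm.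
Qed.


Lemma perp_closed z : closed_subsystem Phi [seq b <- Phi | dotv b z == 0].
Proof.
split.
- by move=> b; rewrite mem_filter => /andP[].
- move=> a b; rewrite !mem_filter => /andP[/eqP az aP] /andP[/eqP bz bP].
  by rewrite refl_Phi // andbT; apply/eqP/dotv_perp_refl.
- move=> a b; rewrite !mem_filter => /andP[/eqP az aP] /andP[/eqP bz bP] abP.
  by rewrite abP andbT dotvDl az bz addr0.
Qed.

Hypothesis n0 : (0 < n)%N.

Lemma good_perp Psi z : good_subsystem Phi Psi -> z != 0 ->
  (forall b, b \in Psi -> dotv b z = 0) ->
  forall b, b \in Phi -> dotv b z = 0 -> b \in Psi.
Proof.
case=> [[sub _ _] rkP max] z0 Hz b bP bz.
have sPsi : {subset Psi <= [seq b <- Phi | dotv b z == 0]}.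
  by move=> a aP; rewrite mem_filter Hz // eqxx sub.
have rkP' : rk [seq b <- Phi | dotv b z == 0] = n.-1.
  apply/eqP; rewrite eqn_leq; apply/andP; split.
    have h : (rk [seq b <- Phi | dotv b z == 0%R] < n)%N.
      by apply: (rk_perp z0) => a; rewrite mem_filter => /andP[/eqP].
    exact: leq_pred_lt h.
  by rewrite -rkP; exact: rk_subset sPsi.
by apply: (max _ (perp_closed z) rkP' sPsi); rewrite mem_filter bz eqxx.
Qed.

Lemma dom_coef (u : V) (c : 'I_n -> nat) j :
  (forall k, 0 <= dotv u (alpha k)) -> dotv (ncomb alpha c) u = 0 ->
  dotv u (alpha j) != 0 -> c j = 0%N.
Proof.
move=> D H uj.
move: H; rewrite /ncomb dotv_suml => /eqP; rewrite psumr_eq0 => [/allP H|k _]; last first.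
  by rewrite dotvZl dotvC mulr_ge0.
have := H j (mem_index_enum _); rewrite /= dotvZl dotvC mulf_eq0 (negbTE uj) orbF.
by rewrite pnatr_eq0 => /eqP.
Qed.

Lemma comb_zspan (e : 'I_n -> int) j : e j = 0 ->
  in_zspan_del alpha theta ord0 (lift ord0 j) (\sum_k (e k)%:~R *: alpha k).
Proof.
move=> ej.
exists (fun k => if unlift ord0 k is Some i then e i else 0).
rewrite [RHS]big_mkcond [RHS]big_ord_recl /= add0r.
apply: eq_bigr => i _; rewrite /atil liftK.
rewrite (inj_eq (lift_inj (h := ord0))).
by case: eqP => [->|]; rewrite ?ej ?scale0r.
Qed.


Lemma zspan_perp c j (u : V) : in_zspan_del alpha theta ord0 (lift ord0 j) c ->
  (forall k, k != j -> dotv (alpha k) u = 0) -> dotv c u = 0.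
Proof.
move=> [e ->] H; rewrite dotv_suml big1 // => k /andP[k0 kj].
case: (unliftP ord0 k) k0 kj => [i ->|->]; last by rewrite eqxx.
rewrite (inj_eq (lift_inj (h := ord0))) => _ ij.
by rewrite dotvZl /atil liftK H ?mulr0.
Qed.

Lemma ncomb_int c : ncomb alpha c = \sum_k ((c k)%:Z)%:~R *: alpha k.
Proof. by apply: eq_bigr => k _; rewrite -pmulrn. Qed.

Lemma ncomb_intN c : - ncomb alpha c = \sum_k (- (c k)%:Z)%:~R *: alpha k.
Proof.
rewrite /ncomb -sumrN; apply: eq_bigr => k _; by rewrite intrN -pmulrn scaleNr.
Qed.


Lemma dir2 Psi : good_subsystem Phi Psi ->
  exists (i j : 'I_n.+1) (w : V -> V),
    [/\ i != j, coprime (mlab m i) (mlab m j), weyl Phi w &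
        forall b, b \in Psi <->
          exists c, [/\ c \in Phi, in_zspan_del alpha theta i j c & b = w c]].
Proof.
move=> G; have G' := G; case: G' => [[sub _ _] rkP _].
have [v v0 Hv] : exists2 v, v != 0 & forall b, b \in Psi -> dotv b v = 0.
  by apply: perp_exists; rewrite rkP prednK.
have GP := good_perp G v0 Hv.
have [s sP D] := dominate v.
set u := W s v in D.
have sd := all_dot sP.
have rsP : {subset rev s <= Phi} by move=> x; rewrite mem_rev => /sP.
have rsd := all_dot rsP.
have K1 x : W (rev s) (W s x) = x by apply: W_inv.
have K2 x : W s (W (rev s) x) = x by have := W_inv x rsd; rewrite revK.
have Iso x y : dotv (W s x) (W s y) = dotv x y by apply: W_iso.
have Iso' x y : dotv (W (rev s) x) (W (rev s) y) = dotv x y by apply: W_iso.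
have u0 : u != 0 by rewrite -dotvv_eq0 Iso dotvv_eq0.
have [j uj] : exists j, dotv u (alpha j) != 0.
  apply/existsP; apply: contraR u0 => /existsPn H.
  rewrite -dotvv_eq0 {2}(span_alpha u) dotv_sumr big1 // => k _.
  by rewrite dotvZr (eqP (negPn (H k))) mulr0.
have ujp : 0 < dotv u (alpha j) by rewrite lt_def uj D.
have cj b : b \in Phi -> dotv b u = 0 -> exists e : 'I_n -> int, e j = 0 /\
    b = \sum_k (e k)%:~R *: alpha k.
  move=> bP bu; case: HB => _ _ /(_ b bP) [c [bc|bc]].
    exists (fun k => (c k)%:Z); split; last by rewrite bc ncomb_int.
    by rewrite (dom_coef D _ uj) // -bc.
  exists (fun k => - (c k)%:Z); split; last by rewrite bc ncomb_intN.
  rewrite (dom_coef D _ uj) //; apply/eqP; rewrite -oppr_eq0 -dotvNl -bc bu //.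
have uniq k : k != j -> dotv (alpha k) u = 0.
  move=> kj; apply/eqP/negPn/negP => uk.
  set z := W (rev s) (dv j).
  have dj0 : dv j != 0.
    apply/eqP => h; have := dotv_dv j j; rewrite h dotv0r eqxx => /eqP.
    by rewrite eq_sym oner_eq0.
  have z0 : z != 0 by rewrite -dotvv_eq0 Iso' dotvv_eq0.
  have Hz : forall b, b \in Psi -> dotv b z = 0.
    move=> b bPsi; rewrite -Iso K2.
    have bP := sub _ bPsi.
    have [e [ej ->]] := cj _ (W_Phi sP bP) (ltac:(by rewrite /u Iso Hv)).
    rewrite dotv_suml big1 // => l _; rewrite dotvZl dotv_dv.
    by case: eqP => [->|_]; rewrite ?ej ?mulr0 ?mul0r.
  have := good_perp G z0 Hz (W_Phi rsP (alpha_Phi k)).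
  rewrite /z Iso' dotv_dv (negbTE kj) => /(_ erefl) /Hv.
  by rewrite -Iso K2 dotvC -/u => h; move: uk; rewrite dotvC h eqxx.
exists ord0, (lift ord0 j), (W (rev s)); split.
- exact: neq_lift.
- by rewrite /mlab unlift_none coprime1n.
- by exists (rev s).
move=> b; split.
  move=> bPsi; have bP := sub _ bPsi.
  exists (W s b); split; first exact: W_Phi.
  + have [e [ej ->]] := cj _ (W_Phi sP bP) (ltac:(by rewrite /u Iso Hv)).
    exact: comb_zspan.
  + by rewrite K1.
case=> c [cP cz ->]; apply: GP; first exact: W_Phi.
by rewrite -(K1 v) Iso' -/u; apply: zspan_perp cz uniq.
Qed.


Notation atl := (atil alpha theta).
Definition mt (k : 'I_n.+1) : R := (mlab m k)%:R.

Lemma sum_delta (F : 'I_n.+1 -> R) i : \sum_k F k * (k == i)%:R = F i.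
Proof.
rewrite (bigD1 i) //= eqxx mulr1 big1 ?addr0 // => k ki.
by rewrite (negbTE ki) mulr0.
Qed.

Lemma rel_atil : \sum_k mt k *: atl k = 0.
Proof.
rewrite big_ord_recl /mt /mlab /atil unlift_none scale1r.
under eq_bigr => l _ do rewrite liftK.
by rewrite Hth addrC -/(ncomb alpha m) subrr.
Qed.

Lemma dotv_rel (g : 'I_n.+1 -> R) (z : V) :
  (forall l, dotv (atl (lift ord0 l)) z = g (lift ord0 l)) ->
  \sum_k mt k * g k = 0 -> forall k, dotv (atl k) z = g k.
Proof.
move=> H S k; case: (unliftP ord0 k) => [l ->|->]; first exact: H.
have : \sum_k mt k * dotv (atl k) z = 0.
  transitivity (dotv (\sum_k mt k *: atl k) z); last by rewrite rel_atil dotv0l.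
  by rewrite dotv_suml; apply: eq_bigr => l _; rewrite dotvZl.
move=> E0; have E1 : \sum_k mt k * dotv (atl k) z = \sum_k mt k * g k by rewrite E0 S.
rewrite !big_ord_recl in E1.
have E2 : \sum_(i < n) mt (lift ord0 i) * dotv (atl (lift ord0 i)) z =
          \sum_(i < n) mt (lift ord0 i) * g (lift ord0 i).
  by apply: eq_bigr => l _; rewrite H.
rewrite E2 /mt /mlab unlift_none !mul1r in E1.
exact: addIr E1.
Qed.


Lemma theta_neg : - theta \in Phi.
Proof.
have := refl_Phi Hthp Hthp; rewrite /refl mulfK ?Phi_dot //.
by rewrite scaler_nat mulr2n opprD addrA subrr add0r.
Qed.

Lemma atl_Phi k : atl k \in Phi.
Proof.
by rewrite /atil; case: (unlift ord0 k) => [l|]; [apply: alpha_Phi | apply: theta_neg].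
Qed.

Lemma rk_lower_gen p q : p != q -> mt q != 0 ->
  (n <= (rk (map atl (filter (fun k => (k != p) && (k != q)) (enum 'I_n.+1)))).+1)%N.
Proof.
move=> pq mq.
set S := map atl _; set M := (mxs S + atl p)%MS.
have inS k : k != p -> k != q -> (atl k <= M)%MS.
  move=> kp kq; apply: submx_trans (addsmxSl _ _); apply: mem_inspan.
  by apply: map_f; rewrite mem_filter kp kq mem_enum.
have all k : (atl k <= M)%MS.
  have [->|kp] := eqVneq k p; first exact: addsmxSr.
  have [->|kq] := eqVneq k q; last exact: inS.
  have R0 := rel_atil; rewrite (bigD1 q) //= in R0.
  move/eqP: R0; rewrite addr_eq0 => /eqP E.
  have -> : atl q = (mt q)^-1 *: (mt q *: atl q) by rewrite scalerA mulVf ?scale1r.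
  apply: scalemx_sub; rewrite E -scaleN1r; apply: scalemx_sub.
  apply: summx_sub => l lq; apply: scalemx_sub.
  have [->|lp] := eqVneq l p; first exact: addsmxSr.
  exact: inS.
have AM : (Amx <= M)%MS.
  apply/row_subP => l; rewrite rowK.
  by have := all (lift ord0 l); rewrite /atil liftK.
have rA : \rank Amx = n by case: HB => _ /eqP.
have h1 := mxrankS AM; rewrite rA in h1; apply: leq_trans h1 _.
apply: leq_trans (mxrank_adds_leqif _ _).1 _.
by rewrite -[X in (_ <= X)%N]addn1 leq_add2l rank_leq_row.
Qed.

Section D1.
Variables (i j : 'I_n.+1).
Hypotheses (ij : i != j) (cop : coprime (mlab m i) (mlab m j)).

Definition dt (k : 'I_n.+1) : V := if unlift ord0 k is Some l then dv l else 0.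

Lemma dotv_dt l k : dotv (alpha l) (dt k) = (lift ord0 l == k)%:R.
Proof.
rewrite /dt; case: (unliftP ord0 k) => [l' ->|->].
  by rewrite dotv_dv (inj_eq (lift_inj (h := ord0))).
by rewrite dotv0r eq_sym (negbTE (neq_lift _ _)).
Qed.

Definition vv : V := mt j *: dt i - mt i *: dt j.
Definition ff (k : 'I_n.+1) : R := mt j * (k == i)%:R - mt i * (k == j)%:R.

Lemma dotv_vv k : dotv (atl k) vv = ff k.
Proof.
apply: dotv_rel => [l|].
  by rewrite /atil liftK /vv dotvBr !dotvZr !dotv_dt.
rewrite /ff; under eq_bigr => k0 _ do rewrite mulrBr !mulrA.
by rewrite sumrB !sum_delta mulrC subrr.
Qed.

Lemma vv0 : vv != 0.
Proof.
apply/negP => /eqP h.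
have hi := dotv_vv i; have hj := dotv_vv j.
rewrite h dotv0r /ff eqxx (negbTE ij) mulr0 mulr1 subr0 in hi.
rewrite h dotv0r /ff eqxx eq_sym (negbTE ij) mulr0 mulr1 sub0r in hj.
move: cop; rewrite /coprime.
have -> : mlab m j = 0%N by apply/eqP; rewrite -(pnatr_eq0 R) -/(mt j) -hi.
have -> : mlab m i = 0%N by apply/eqP; rewrite -(pnatr_eq0 R) -/(mt i) -oppr_eq0 -hj.
by [].
Qed.

Notation zs := (in_zspan_del alpha theta i j).

Lemma zs_perp b : zs b -> dotv b vv = 0.
Proof.
case=> e ->; rewrite dotv_suml big1 // => k /andP[ki kj].
by rewrite dotvZl dotv_vv /ff (negbTE ki) (negbTE kj) !mulr0 subr0 mulr0.
Qed.

Lemma zs_full (e : 'I_n.+1 -> int) : e i = 0 -> e j = 0 ->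
  zs (\sum_k (e k)%:~R *: atl k).
Proof.
move=> ei ej; exists e; rewrite [RHS]big_mkcond; apply: eq_bigr => k _.
by case: eqP => [->|_]; case: eqP => [->|_] //=; rewrite ?ei ?ej scale0r.
Qed.

Lemma zs_comb b a (z : int) : zs b -> zs a -> zs (b - z%:~R *: a).
Proof.
case=> eb ->; case=> ea ->; exists (fun k => eb k - z * ea k).
rewrite scaler_sumr -sumrB; apply: eq_bigr => k _.
by rewrite scalerA -intrM -scalerBl -intrB.
Qed.

Lemma zs_add b a : zs b -> zs a -> zs (b + a).
Proof.
by move=> hb ha; have := zs_comb (-1) hb ha; rewrite scaleNr scale1r opprK.
Qed.

Lemma affine_coord b : b \in Phi -> exists e : 'I_n.+1 -> int,
  b = \sum_k (e k)%:~R *: atl k.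
Proof.
move=> bP; have [e ->] : exists e : 'I_n -> int, b = \sum_k (e k)%:~R *: alpha k.
  case: HB => _ _ /(_ b bP) [c [->|->]].
    by exists (fun k => (c k)%:Z); rewrite ncomb_int.
  by exists (fun k => - (c k)%:Z); rewrite ncomb_intN.
exists (fun k => if unlift ord0 k is Some l then e l else 0).
rewrite big_ord_recl unlift_none scale0r add0r; apply: eq_bigr => l _.
by rewrite /atil liftK.
Qed.

Lemma perp_zs b : b \in Phi -> dotv b vv = 0 -> zs b.
Proof.
move=> bP bv; have [e be] := affine_coord bP.
have E : e i * (mlab m j)%:Z = e j * (mlab m i)%:Z.
  move: bv; rewrite be dotv_suml.
  under eq_bigr => k _ do rewrite dotvZl dotv_vv /ff mulrBr !mulrA.
  rewrite sumrB !sum_delta /mt => /eqP; rewrite subr_eq0 => /eqP.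
  by move=> h; apply/eqP; rewrite -(eqr_int R) !intrM; apply/eqP; exact: h.
have [t [ti tj]] := int_gauss cop E.
have -> : b = \sum_k (e k - t * (mlab m k)%:Z)%:~R *: atl k.
  rewrite be; under [RHS]eq_bigr => k _ do rewrite intrB scalerBl intrM -scalerA.
  rewrite sumrB -scaler_sumr.
  have -> : \sum_k ((mlab m k)%:Z)%:~R *: atl k = 0.
    by rewrite -[RHS]rel_atil; apply: eq_bigr => k _.
  by rewrite scaler0 subr0.
by apply: zs_full; rewrite ?ti ?tj subrr.
Qed.

Lemma atl_zs k : k != i -> k != j -> zs (atl k).
Proof.
move=> ki kj; exists (fun l => (l == k)%:Z).
rewrite (bigD1 k) /=; last by rewrite ki kj.
rewrite eqxx scale1r big1 ?addr0 // => l /andP[_ lk].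
by rewrite (negbTE lk) scale0r.
Qed.

Lemma dir1 Psi : (forall b, b \in Psi <-> (b \in Phi /\ zs b)) -> good_subsystem Phi Psi.
Proof.
move=> HP.
have subP : {subset Psi <= Phi} by move=> b /HP[].
have perp b : b \in Psi -> dotv b vv = 0 by move=> /HP[_ /zs_perp].
have cl : closed_subsystem Phi Psi.
  split => //.
  - move=> a b /HP[aP za] /HP[bP zb]; apply/HP; split; first exact: refl_Phi.
    case: HR => _ _ _ /(_ _ _ aP bP) /intrP [z ez].
    by rewrite /refl ez; exact: zs_comb.
  - by move=> a b /HP[aP za] /HP[bP zb] abP; apply/HP; split => //; exact: zs_add.
have rle : (rk Psi <= n.-1)%N := leq_pred_lt (rk_perp vv0 perp).
have inPsi k : k != i -> k != j -> atl k \in Psi.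
  by move=> ki kj; apply/HP; split; [apply: atl_Phi | apply: atl_zs].
have rge : (n.-1 <= rk Psi)%N.
  apply: leq_predS.
  have [mj|mj] := boolP (mt j != 0).
    apply: leq_trans (rk_lower_gen ij mj) _; rewrite ltnS; apply: rk_subset.
    by move=> x /mapP[k]; rewrite mem_filter => /andP[/andP[ki kj] _] ->; apply: inPsi.
  have mi : mt i != 0.
    apply/negP => /eqP mi0.
    have ei : mlab m i = 0%N by apply/eqP; rewrite -(pnatr_eq0 R); apply/eqP.
    have ej : mlab m j = 0%N by apply/eqP; rewrite -(pnatr_eq0 R); apply/negPn.
    by move: cop; rewrite /coprime ei ej.
  have ji : j != i by rewrite eq_sym.
  apply: leq_trans (rk_lower_gen ji mi) _; rewrite ltnS; apply: rk_subset.
  by move=> x /mapP[k]; rewrite mem_filter => /andP[/andP[kj ki] _] ->; apply: inPsi.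
have rkP : rk Psi = n.-1 by apply/eqP; rewrite eqn_leq rle rge.
split => // Psi' [sub' _ _] rk' sPP b bP'.
have A1 : (mxs Psi <= mxs Psi')%MS by apply: mxs_subP => x xP; apply: mem_inspan; apply: sPP.
have A2 : (mxs Psi' <= mxs Psi)%MS.
  by rewrite -(mxrank_leqif_sup A1).2; apply/eqP; rewrite -/(rk _) -/(rk _) rkP rk'.
have bs : (b <= mxs Psi)%MS := submx_trans (mem_inspan bP') A2.
apply/HP; split; first exact: sub' bP'.
apply: perp_zs; [exact: sub' | exact: perp_span bs perp].
Qed.

End D1.

End Roots.

Theorem theoremA (R : realType) (r : nat) (Phi : seq 'rV[R]_r)
    (alpha : 'I_r -> 'rV[R]_r) (theta : 'rV[R]_r) (m : 'I_r -> nat) :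
  (0 < r)%N ->
  root_system Phi -> reduced Phi -> irreducible Phi ->
  is_base Phi alpha -> highest_root Phi alpha theta ->
  theta = ncomb alpha m ->
  (forall (i j : 'I_r.+1) (Psi : seq 'rV[R]_r),
     i != j -> coprime (mlab m i) (mlab m j) ->
     (forall b, b \in Psi <-> (b \in Phi /\ in_zspan_del alpha theta i j b)) ->
     good_subsystem Phi Psi)
  /\
  (forall Psi : seq 'rV[R]_r, good_subsystem Phi Psi ->
     exists (i j : 'I_r.+1) (w : 'rV[R]_r -> 'rV[R]_r),
       [/\ i != j, coprime (mlab m i) (mlab m j), weyl Phi w &
           forall b, b \in Psi <->
             exists c, [/\ c \in Phi, in_zspan_del alpha theta i j c & b = w c]]).
Proof.
move=> n0 HR _ _ HB [Hthp _] Hth; split.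
- by move=> i j Psi ij cop HP; apply: (dir1 HR HB Hth Hthp ij cop HP).
- by move=> Psi G; apply: (dir2 theta m HR HB n0 G).
Qed.
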